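(* Let $R$ be a ring, $n$ a positive integer, $P$ a divided weakly prime ideal of $R$, and $I$ a weakly $n$-absorbing ideal of $R$ with $\sqrt{I}=P$. Then $I$ is a weakly primary ideal of $R$.
   Context: All rings are commutative with $1\neq0$. A proper ideal $P$ is weakly prime if $0\neq ab\in P$ implies $a\in P$ or $b\in P$; a weakly prime ideal $P$ is divided if $P\subset xR$ for every $x\in R\setminus P$. A proper ideal $I$ is weakly primary if $0\neq ab\in I$ implies $a\in I$ or $b\in\sqrt{I}$. A proper ideal $I$ is weakly $n$-absorbing if whenever $0\neq a_1\cdots a_{n+1}\in I$ with $a_1,\dots,a_{n+1}\in R$, there are $n$ of the $a_i$'s whose product is in $I$. *)

(* Defs.v *)
From mathcomp Require Import all_boot all_order all_algebra.
Set Implicit Arguments. Unset Strict Implicit. Unset Printing Implicit Defensive.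
Import GRing.Theory.
Local Open Scope ring_scope.

Definition is_ideal (R : comNzRingType) (I : R -> Prop) : Prop :=
  [/\ I 0, (forall x y, I x -> I y -> I (x + y)), (forall x, I x -> I (- x))
    & (forall r x, I x -> I (r * x))].

Definition proper_ideal (R : comNzRingType) (I : R -> Prop) : Prop :=
  is_ideal I /\ ~ I 1.

Definition radical (R : comNzRingType) (I : R -> Prop) : R -> Prop :=
  fun x => exists n : nat, I (x ^+ n).

Definition weakly_prime (R : comNzRingType) (P : R -> Prop) : Prop :=
  proper_ideal P /\
  forall a b : R, a * b != 0 -> P (a * b) -> P a \/ P b.

Definition divided_weakly_prime (R : comNzRingType) (P : R -> Prop) : Prop :=
  weakly_prime P /\
  forall x : R, ~ P x -> forall p : R, P p -> exists r : R, p = x * r.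

Definition weakly_primary (R : comNzRingType) (I : R -> Prop) : Prop :=
  proper_ideal I /\
  forall a b : R, a * b != 0 -> I (a * b) -> I a \/ radical I b.

Definition weakly_n_absorbing (R : comNzRingType) (n : nat) (I : R -> Prop) : Prop :=
  proper_ideal I /\
  forall a : 'I_n.+1 -> R,
    \prod_(i < n.+1) a i != 0 -> I (\prod_(i < n.+1) a i) ->
    exists j : 'I_n.+1, I (\prod_(i < n.+1 | i != j) a i).

(* Main.v *)
Require Import Defs.
From mathcomp Require Import all_boot all_order all_algebra.
From Stdlib Require Import Classical.
Set Implicit Arguments. Unset Strict Implicit. Unset Printing Implicit Defensive.
Import GRing.Theory.
Local Open Scope ring_scope.

Lemma pow_decomp (R : comNzRingType) (P : R -> Prop) (a b : R) :
  divided_weakly_prime P -> a != 0 -> P a -> ~ P b ->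
  forall k : nat, exists x, P x /\ a = b ^+ k * x.
Proof.
move=> [[_ wp] div] a0 Pa Pb; elim=> [|k [x [Px ax]]].
  by exists a; rewrite expr0 mul1r.
have [r xr] := div b Pb x Px.
exists r; split; last by rewrite ax xr exprS mulrA (mulrC (b ^+ k)).
have : b * r != 0.
  by rewrite -xr; apply: contraNneq a0 => x0; rewrite ax x0 mulr0.
move=> /wp H; have := H; rewrite -xr => /(_ Px); by case.
Qed.

Theorem mainTheorem16 (R : comNzRingType) (n : nat) (P I : R -> Prop) :
  (0 < n)%N ->
  divided_weakly_prime P ->
  weakly_n_absorbing n I ->
  (forall x : R, radical I x <-> P x) ->
  weakly_primary I.
Proof.
move=> n0 dP [pI abs] rad; split => // a b ab0 Iab.
have IP : forall y, I y -> P y by move=> y Iy; apply/rad; exists 1%N; rewrite expr1.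
have [Pa|Pb] : P a \/ P b by apply: dP.1.2 => //; exact: IP.
  case: (classic (I a)) => Ia; [by left|right].
  apply/rad; apply: NNPP => Pb.
  have a0 : a != 0 by apply: contraNneq ab0 => ->; rewrite mul0r.
  have [x [Px ax]] := pow_decomp dP a0 Pa Pb n.-1.
  pose f := fun i : 'I_n.+1 => if i == ord0 then x else b.
  have hb : \prod_(i < n) b = b ^+ n by rewrite prodr_const card_ord.
  have E : \prod_(i < n.+1) f i = a * b.
    rewrite big_ord_recl /f eqxx.
    have -> : \prod_(i<n) (if lift ord0 i == ord0 then x else b) = \prod_(i<n) b.
      by apply: eq_bigr.
    by rewrite hb ax -{1}(prednK n0) exprSr mulrCA mulrA.
  rewrite -E in ab0 Iab.
  have [j] := abs f ab0 Iab.
  rewrite big_mkcond big_ord_recl /=.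
  case: (unliftP ord0 j) => [j'|] ->.
  - rewrite /f /=.
    have -> : \prod_(i<n) (if lift ord0 i != lift ord0 j' then b else 1)
       = \prod_(i<n | i != j') b.
      rewrite [RHS]big_mkcond; apply: eq_bigr => i _.
      by rewrite (inj_eq (@lift_inj _ ord0)).
    by rewrite prodr_const cardC1 card_ord /= mulrC -ax.
  - rewrite /f /= mul1r.
    have -> : \prod_(i<n) (if lift ord0 i != ord0 then (if lift ord0 i == ord0 then x else b) else 1) = \prod_(i<n) b.
      by apply: eq_bigr.
    rewrite hb => Ibn; apply: Pb; apply/rad; by exists n.
by right; apply/rad.
Qed.
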